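(* Let $T\in V$ be a target variable. If $\zeta_T=0$ (i.e. $T\notin\Upsilon_i$ for all $i$) and $\Upsilon$ is not conservative, then $pa(T)\subseteq\bigcup_{i=1}^{n}MB_i(T)\subseteq MB(T)$.
   Context: Let $G=(V,E)$ be a DAG (causal Bayesian network) over a finite set $V$ of random variables with joint distribution $P$ satisfying the Markov condition with respect to $G$; causal sufficiency is assumed. For $X\in V$, $pa(X)$ and $ch(X)$ are the parents and children of $X$ in $G$, $sp(X)=\big(\bigcup_{Y\in ch(X)}pa(Y)\big)\setminus\{X\}$ is the set of spouses, and $MB(X)=pa(X)\cup ch(X)\cup sp(X)$ is the Markov blanket. There are $n\ge 1$ intervention experiments; in the $i$-th, the set $\Upsilon_i\subseteq V$ (possibly empty) is manipulated, and $\Upsilon=\{\Upsilon_1,\dots,\Upsilon_n\}$. The post-intervention DAG is $G_i=(V,E_i)$ with $E_i=\{(a,b)\in E: b\notin\Upsilon_i\}$, with distribution $P_i(V)=\prod_{V_j\notin\Upsilon_i}P(V_j\mid pa(V_j))\prod_{V_j\in\Upsilon_i}P_i(V_j)$, and $D_i$ is a dataset drawn from $P_i$. It is assumed that each $P_i$ is faithful to $G_i$ and that conditional independence tests on $D_i$ are reliable (return exactly the conditional independences of $P_i$). $MB_i(T)$ denotes the Markov blanket of $T$ found in $D_i$, i.e. the set of parents, children and spouses of $T$ in $G_i$. $\zeta_T=|\{i:T\in\Upsilon_i\}|$. $\Upsilon$ is called conservative if for every $V_j\in\bigcup_{i=1}^n\Upsilon_i$ there exists $i$ with $V_j\notin\Upsilon_i$.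 *)

(* Defs.v *)
From mathcomp Require Import all_boot.
Set Implicit Arguments. Unset Strict Implicit. Unset Printing Implicit Defensive.

Section Graph.
Variable V : finType.

(* A directed graph given by its edge relation: E a b means a -> b. *)
Definition acyclic (E : rel V) : Prop := forall a b, E a b -> ~~ connect E b a.

Definition pa (E : rel V) (X : V) : {set V} := [set Y | E Y X].
Definition ch (E : rel V) (X : V) : {set V} := [set Y | E X Y].
Definition sp (E : rel V) (X : V) : {set V} :=
  (\bigcup_(Y in ch E X) pa E Y) :\ X.
Definition MB (E : rel V) (X : V) : {set V} := pa E X :|: ch E X :|: sp E X.

Definition post_int (E : rel V) (U : {set V}) : rel V :=
  [rel a b | E a b && (b \notin U)].

(* MB_i(T): the Markov blanket of T found in D_i, which (under faithfulness of
   P_i to G_i and reliable CI tests) is the set of parents, children and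
   spouses of T in G_i. *)
Definition MB_i (E : rel V) (n : nat) (Ups : 'I_n -> {set V}) (i : 'I_n) (T : V)
  : {set V} := MB (post_int E (Ups i)) T.

Definition zeta (n : nat) (Ups : 'I_n -> {set V}) (T : V) : nat :=
  #|[set i : 'I_n | T \in Ups i]|.

Definition conservative (n : nat) (Ups : 'I_n -> {set V}) : Prop :=
  forall v, v \in \bigcup_(i < n) Ups i -> exists i : 'I_n, v \notin Ups i.
End Graph.

(* Main.v *)
Require Import Defs.
From mathcomp Require Import all_boot.

Lemma MB_post_sub (V : finType) (E : rel V) (U : {set V}) (T : V) :
  MB (post_int E U) T \subset MB E T.
Proof.
apply/subsetP => x; rewrite /MB /pa /ch /sp !inE /=.
case/orP => [/orP [/andP [-> _]|/andP [-> _]] | ]; rewrite ?orbT //.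
case/andP => ->; case/bigcupP => y; rewrite !inE /= => /andP [Ey _] /andP [Ex _].
apply/orP; right; apply/bigcupP; exists y; by rewrite inE.
Qed.

Theorem theorem3 (V : finType) (E : rel V) (hE : acyclic E)
  (n : nat) (hn : 1 <= n) (Ups : 'I_n -> {set V}) (T : V) :
  zeta Ups T = 0 -> ~ conservative Ups ->
  pa E T \subset \bigcup_(i < n) MB_i E Ups i T /\
  \bigcup_(i < n) MB_i E Ups i T \subset MB E T.
Proof.
move=> hz _; split.
- apply/subsetP => x; rewrite /pa inE => Ex.
  apply/bigcupP; exists (Ordinal hn) => //.
  have hT : T \notin Ups (Ordinal hn).
    apply/negP => hin; move: hz; rewrite /zeta.
    move/eqP; rewrite cards_eq0 => /eqP h.
    have : Ordinal hn \in [set i : 'I_n | T \in Ups i] by rewrite inE.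
    by rewrite h inE.
  by rewrite /MB_i /MB /pa !inE /= /post_int /= Ex hT.
- apply/bigcupsP => i _; exact: MB_post_sub.
Qed.
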